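(* Let $\Gamma$, $v$, $\Lambda$ be as in the context and suppose $v_n=o(V_n)$ as $n\to\infty$. If $\Lambda$ is a $v$-perturbation of $\Gamma$ of deficiency $2$, then $\Lambda$ is not a uniqueness sequence for $H_{(\Gamma,v)}$, i.e. there is a nonzero $a\in\ell^2_v$ such that $H_{(\Gamma,v)}a$ vanishes on $\Lambda$.
   Context: $\Gamma=(\gamma_n)_{n\ge1}$ are distinct complex numbers with $\inf_n|\gamma_{n+1}|/|\gamma_n|>1$; $v=(v_n)$ positive with $\sum_nv_n/(1+|\gamma_n|^2)<\infty$. $\ell^2_v=\{(a_n):\sum|a_n|^2v_n<\infty\}$; $H_{(\Gamma,v)}a(z)=\sum_na_nv_n/(z-\gamma_n)$, $z\in\mathbb{C}\setminus\Gamma$. $V_1=1$, $V_n=\sum_{j<n}v_j$; $P_n=\sum_{j>n}v_j/|\gamma_j|^2$. $\Omega_1=\{|z|<(|\gamma_1|+|\gamma_2|)/2\}$, $\Omega_n=\{(|\gamma_{n-1}|+|\gamma_n|)/2\le|z|<(|\gamma_n|+|\gamma_{n+1}|)/2\}$ ($n\ge2$); $D_n(v;M)=\{\lambda\in\Omega_n: Mv_n/|\lambda-\gamma_n|^2\ge\max(V_n/|\lambda|^2,P_n)\}$. $\Lambda$ is a sequence of distinct nonzero complex numbers disjoint from $\Gamma$, indexed $(\lambda_n)_{n\ge n_0}$ by consecutive integers with $|\lambda_n|$ increasing. $\Lambda$ is a $v$-perturbation of $\Gamma$ if $n_0$ can be chosen so that for some sufficiently large $M$, $\lambda_n\in D_n(v;M)$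 for all but finitely many $n$; with this $n_0$, it is exact if $n_0=1$, of deficiency $n_0-1$ if $n_0>1$, of excess $1-n_0$ if $n_0<1$. *)

(* Defs.v *)
From Stdlib Require Import Reals.
From Coquelicot Require Import Coquelicot.

(* Conventions: all sequences are functions nat -> _, with the paper's
   1-based indices used literally (gamma 1, gamma 2, ...; the value at 0
   is irrelevant).  "sum over j >= m" of f is Series (fun k => f (m + k)). *)

Open Scope R_scope.

(* V_1 = 1, V_n = sum_{j<n} v_j (j >= 1) for n >= 2. *)
Definition Vseq (v : nat -> R) (n : nat) : R :=
  if (n <=? 1)%nat then 1 else sum_f_R0 (fun k => v (S k)) (n - 2).

Definition Pseq (gamma : nat -> C) (v : nat -> R) (n : nat) : R :=
  Series (fun k => v (n + 1 + k)%nat / (Cmod (gamma (n + 1 + k)%nat)) ^ 2).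

Definition in_Omega (gamma : nat -> C) (n : nat) (z : C) : Prop :=
  if (n <=? 1)%nat then Cmod z < (Cmod (gamma 1%nat) + Cmod (gamma 2%nat)) / 2
  else (Cmod (gamma (n - 1)%nat) + Cmod (gamma n)) / 2 <= Cmod z /\
       Cmod z < (Cmod (gamma n) + Cmod (gamma (n + 1)%nat)) / 2.

Definition in_D (gamma : nat -> C) (v : nat -> R) (M : R) (n : nat) (z : C) : Prop :=
  in_Omega gamma n z /\
  Rmax (Vseq v n / (Cmod z) ^ 2) (Pseq gamma v n)
    <= M * v n / (Cmod (z - gamma n)%C) ^ 2.

Definition in_l2v (v : nat -> R) (a : nat -> C) : Prop :=
  ex_series (fun k => (Cmod (a (S k))) ^ 2 * v (S k)).

Definition H_term (gamma : nat -> C) (v : nat -> R) (a : nat -> C) (z : C)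
  (k : nat) : C :=
  (a (S k) * RtoC (v (S k)) / (z - gamma (S k)))%C.

Definition H_vanishes_at (gamma : nat -> C) (v : nat -> R) (a : nat -> C) (z : C) : Prop :=
  is_series (H_term gamma v a z) (RtoC 0).

(* Main.v *)
Require Import Defs.
From Stdlib Require Import Reals.
From Coquelicot Require Import Coquelicot.
From Stdlib Require Import Lra Lia Psatz IndefiniteDescription.
Open Scope R_scope.

Fixpoint csum (f : nat -> C) (n : nat) : C :=
  match n with O => RtoC 0 | S n => Cplus (csum f n) (f n) end.
Fixpoint rsum (f : nat -> R) (n : nat) : R :=
  match n with O => 0 | S n => rsum f n + f n end.
Fixpoint pr (f : nat -> C) (a L : nat) : C :=
  match L with O => RtoC 1 | S L => Cmult (pr f a L) (f (a + L)%nat) end.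
Fixpoint rpr (f : nat -> R) (a L : nat) : R :=
  match L with O => 1 | S L => rpr f a L * f (a + L)%nat end.

Lemma Cmod_tri_sub (x y : C) : Cmod x - Cmod y <= Cmod (x - y).
Proof.
  assert (H := Cmod_triangle (x - y) y).
  replace (x - y + y)%C with x in H by ring. lra.
Qed.

Lemma Cmod_sub_sym (x y : C) : Cmod (x - y) = Cmod (y - x).
Proof. rewrite <- Cmod_opp. f_equal. ring. Qed.

Lemma csum_tri (f : nat -> C) n : Cmod (csum f n) <= rsum (fun k => Cmod (f k)) n.
Proof.
  induction n; simpl. rewrite Cmod_0; lra.
  eapply Rle_trans. apply Cmod_triangle. lra.
Qed.

Lemma rsum_le (f g : nat -> R) n : (forall k, (k < n)%nat -> f k <= g k) ->
  rsum f n <= rsum g n.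
Proof.
  induction n; simpl; intros H. lra.
  assert (f n <= g n) by (apply H; lia).
  assert (rsum f n <= rsum g n) by (apply IHn; intros; apply H; lia). lra.
Qed.

Lemma rsum_geom (K th : R) n : th <> 1 ->
  rsum (fun k => K * th ^ k) n = K * (1 - th ^ n) / (1 - th).
Proof.
  intros Hth. assert (1 - th <> 0) by lra.
  induction n; simpl. field; auto.
  rewrite IHn. field; auto.
Qed.

Lemma csum_ext (f g : nat -> C) n : (forall k, (k < n)%nat -> f k = g k) ->
  csum f n = csum g n.
Proof.
  induction n; simpl; intros H. reflexivity.
  rewrite IHn by (intros; apply H; lia). rewrite H by lia. reflexivity.
Qed.

Lemma csum_plus (f g : nat -> C) n : csum (fun k => f k + g k)%C n = (csum f n + csum g n)%C.
Proof. induction n; simpl. ring. rewrite IHn. ring. Qed.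

Lemma csum_scal (a : C) (f : nat -> C) n : csum (fun k => a * f k)%C n = (a * csum f n)%C.
Proof. induction n; simpl. ring. rewrite IHn. ring. Qed.

Lemma csum_minus (f g : nat -> C) n : csum (fun k => f k - g k)%C n = (csum f n - csum g n)%C.
Proof. induction n; simpl. ring. rewrite IHn. ring. Qed.

Lemma pr_zero (h : nat -> C) a L j : (j < L)%nat -> h (a + j)%nat = RtoC 0 -> pr h a L = RtoC 0.
Proof.
  induction L; intros Hj Hz. lia. simpl.
  destruct (Nat.eq_dec j L). subst. rewrite Hz. ring.
  rewrite IHL by (auto; lia). ring.
Qed.

Lemma C1nz : RtoC 1 <> RtoC 0.
Proof. intro E; injection E; lra. Qed.

Lemma pr_nz (h : nat -> C) a L : (forall j, (j < L)%nat -> h (a + j)%nat <> RtoC 0) -> pr h a L <> RtoC 0.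
Proof.
  induction L; intros H; simpl. exact C1nz.
  apply Cmult_neq_0. apply IHL; intros; apply H; lia. apply H; lia.
Qed.

Lemma pr_div (h k : nat -> C) a L : (forall j, (j < L)%nat -> k (a + j)%nat <> RtoC 0) ->
  pr (fun i => h i / k i)%C a L = (pr h a L / pr k a L)%C.
Proof.
  induction L; intros H; simpl. { field; try exact C1nz. }
  rewrite IHL by (intros; apply H; lia). field. split.
  apply H; lia. apply pr_nz; intros; apply H; lia.
Qed.

Lemma pr_ext (h k : nat -> C) a L : (forall j, (j < L)%nat -> h (a + j)%nat = k (a + j)%nat) ->
  pr h a L = pr k a L.
Proof.
  induction L; intros H; simpl. reflexivity.
  rewrite IHL by (intros; apply H; lia). rewrite H by lia. reflexivity.
Qed.

Lemma pr_shift (h : nat -> C) a L : pr h a (S L) = (h a * pr h (S a) L)%C.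
Proof.
  induction L. simpl. rewrite Nat.add_0_r. ring.
  change (pr h a (S (S L))) with (pr h a (S L) * h (a + S L)%nat)%C.
  rewrite IHL. change (pr h (S a) (S L)) with (pr h (S a) L * h (S a + L)%nat)%C.
  replace (a + S L)%nat with (S a + L)%nat by lia. ring.
Qed.

Lemma pr_Cmod_le (h : nat -> C) (w : nat -> R) a L :
  (forall j, (j < L)%nat -> Cmod (h (a + j)%nat) <= w (a + j)%nat) ->
  Cmod (pr h a L) <= rpr w a L.
Proof.
  induction L; intros H; simpl. rewrite Cmod_1; lra.
  rewrite Cmod_mult. apply Rmult_le_compat; try apply Cmod_ge_0.
  apply IHL; intros; apply H; lia. apply H; lia.
Qed.

Lemma pr_exp_bound (h : nat -> C) (U : nat -> R) a L :
  (forall j, Cmod (h (a + j)%nat - 1) <= U j) ->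
  Cmod (pr h a L) <= exp (rsum U L).
Proof.
  intros H; induction L; simpl. rewrite Cmod_1, exp_0; lra.
  rewrite Cmod_mult, exp_plus. apply Rmult_le_compat; try apply Cmod_ge_0. auto.
  eapply Rle_trans with (1 + U L).
  assert (E := Cmod_triangle (h (a + L)%nat - 1) 1).
  replace (h (a + L)%nat - 1 + 1)%C with (h (a + L)%nat) in E by ring.
  rewrite Cmod_1 in E. specialize (H L). lra.
  apply exp_ineq1_le.
Qed.

Lemma choice_nat (P : nat -> C -> Prop) : (forall n, exists p, P n p) ->
  exists f : nat -> C, forall n, P n (f n).
Proof.
  intros H. exists (fun n => proj1_sig (constructive_indefinite_description _ (H n))).
  intros n. exact (proj2_sig (constructive_indefinite_description _ (H n))).
Qed.

Lemma finmax (f : nat -> R) (N : nat) : exists W, forall n, (n <= N)%nat -> f n <= W.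
Proof.
  induction N. exists (f 0%nat); intros n Hn; replace n with 0%nat by lia; lra.
  destruct IHN as [W HW]. exists (Rmax W (f (S N))). intros n Hn.
  destruct (Nat.eq_dec n (S N)). subst; apply Rmax_r.
  eapply Rle_trans. apply HW; lia. apply Rmax_l.
Qed.

Lemma geom_small (th y : R) : 0 <= th < 1 -> 0 < y -> exists N, forall n, (N <= n)%nat -> th ^ n < y.
Proof.
  intros Hth Hy. destruct (pow_lt_1_zero th ltac:(rewrite Rabs_right; lra) y Hy) as [N HN].
  exists N; intros n Hn. specialize (HN n Hn). rewrite Rabs_right in HN; auto.
  apply Rle_ge, pow_le; lra.
Qed.

Lemma tele_geom (u : nat -> C) (K th : R) : 0 <= th < 1 ->
  (forall j, Cmod (u (S j) - u j) <= K * th ^ j) ->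
  forall L d, Cmod (u (L + d)%nat - u L) <= K * th ^ L * (1 - th ^ d) / (1 - th).
Proof.
  intros Hth H L d. induction d.
  rewrite Nat.add_0_r. replace (u L - u L)%C with (RtoC 0) by ring. rewrite Cmod_0.
  simpl. replace (1 - 1) with 0 by ring. unfold Rdiv; rewrite Rmult_0_r, Rmult_0_l; lra.
  replace (u (L + S d)%nat - u L)%C with ((u (S (L + d)) - u (L + d)%nat) + (u (L + d)%nat - u L))%C
    by (replace (L + S d)%nat with (S (L + d)) by lia; ring).
  eapply Rle_trans. apply Cmod_triangle.
  eapply Rle_trans. apply Rplus_le_compat. apply H. apply IHd.
  right. rewrite pow_add. simpl. field. lra.
Qed.

Lemma Cmod_le_sum (z : C) : Cmod z <= Rabs (fst z) + Rabs (snd z).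
Proof.
  destruct z as [x y]. unfold Cmod; simpl.
  assert (0 <= Rabs x) by apply Rabs_pos. assert (0 <= Rabs y) by apply Rabs_pos.
  rewrite <- (sqrt_Rsqr (Rabs x + Rabs y)) by lra. apply sqrt_le_1_alt.
  unfold Rsqr. assert (Hx : x * x = Rabs x * Rabs x) by (rewrite <- Rabs_mult; rewrite Rabs_right; nra).
  assert (Hy : y * y = Rabs y * Rabs y) by (rewrite <- Rabs_mult; rewrite Rabs_right; nra).
  simpl. nra.
Qed.

Lemma cauchy_geom (u : nat -> C) (G th : R) : 0 <= th < 1 ->
  (forall L M, (L <= M)%nat -> Cmod (u M - u L) <= G * th ^ L) ->
  exists p, forall L, Cmod (p - u L) <= G * th ^ L.
Proof.
  intros Hth H.
  assert (HG : 0 <= G).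
  { specialize (H 0%nat 0%nat (le_n _)). replace (u 0%nat - u 0%nat)%C with (RtoC 0) in H by ring.
    rewrite Cmod_0 in H. simpl in H. lra. }
  assert (Hcc : forall (pj : C -> R), (forall z, Rabs (pj z) <= Cmod z) ->
     (forall z w, pj (z - w)%C = pj z - pj w) ->
     {l : R | Un_cv (fun n => pj (u n)) l}).
  { intros pj Hpj Hlin. apply Rcomplete.R_complete. intros eps Heps.
    destruct (geom_small th (eps / (G + 1)) Hth) as [N HN].
    apply Rdiv_lt_0_compat; lra.
    exists N. intros n m Hn Hm. unfold R_dist. rewrite <- Hlin.
    assert (forall a b, (N <= a)%nat -> (a <= b)%nat -> Rabs (pj (u b - u a)%C) < eps).
    { intros a b Ha Hb. eapply Rle_lt_trans. apply Hpj. eapply Rle_lt_trans. apply H; auto.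
      specialize (HN a Ha).
      apply Rle_lt_trans with ((G + 1) * th ^ a).
      apply Rmult_le_compat_r. apply pow_le; lra. lra.
      apply (Rmult_lt_compat_l (G+1)) in HN; [|lra].
      replace ((G + 1) * (eps / (G + 1))) with eps in HN by (field; lra). lra. }
    destruct (Nat.le_ge_cases n m).
    replace (pj (u n - u m)%C) with (- pj (u m - u n)%C) by (rewrite !Hlin; ring).
    rewrite Rabs_Ropp. apply H0; auto.
    apply H0; auto. }
  destruct (Hcc fst) as [lr Hr].
  { intros z. eapply Rle_trans. 2: apply Rmax_Cmod. apply Rmax_l. }
  { intros; reflexivity. }
  destruct (Hcc snd) as [li Hi].
  { intros z. eapply Rle_trans. 2: apply Rmax_Cmod. apply Rmax_r. }
  { intros; reflexivity. }
  exists (lr, li). intros L. apply Rle_plus_epsilon. intros eps Heps.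
  destruct (Hr (eps/2) ltac:(lra)) as [N1 HN1].
  destruct (Hi (eps/2) ltac:(lra)) as [N2 HN2].
  set (M := Nat.max L (Nat.max N1 N2)).
  specialize (HN1 M ltac:(unfold M; lia)). specialize (HN2 M ltac:(unfold M; lia)).
  unfold R_dist in *.
  replace ((lr, li) - u L)%C with (((lr, li) - u M) + (u M - u L))%C by ring.
  eapply Rle_trans. apply Cmod_triangle.
  assert (Cmod (u M - u L) <= G * th ^ L) by (apply H; unfold M; lia).
  assert (Cmod ((lr, li) - u M)%C <= eps).
  { eapply Rle_trans. apply Cmod_le_sum. simpl.
    rewrite <- (Rabs_Ropp (lr + _)), <- (Rabs_Ropp (li + _)).
    replace (- (lr + - fst (u M))) with (fst (u M) - lr) by ring.
    replace (- (li + - snd (u M))) with (snd (u M) - li) by ring. lra. }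
  lra.
Qed.

Definition fct (g l : nat -> C) n k := ((g n - l k) * g k / ((g n - g k) * l k))%C.
Definition nb n := Nat.max n 2.
Definition Ec (g l : nat -> C) n : C :=
  if (n =? 1)%nat then Cinv (g 1%nat - g 2%nat)
  else if (n =? 2)%nat then Cinv (g 2%nat - g 1%nat)
  else (g n * (g n - l n) / l n * pr (fct g l n) 3 (n - 3) / ((g n - g 1%nat) * (g n - g 2%nat)))%C.
Definition cN g l N n := (Ec g l n * pr (fct g l n) (S (nb n)) (N - nb n))%C.
Definition rr (g l : nat -> C) N z :=
  (pr (fun k => (z - l k) * g k / l k) 3 (N - 2) / pr (fun k => z - g k) 1 N)%C.

Lemma pr_S (f : nat -> C) a L : pr f a (S L) = (pr f a L * f (a + L)%nat)%C.
Proof. reflexivity. Qed.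

Lemma pr_O (f : nat -> C) a : pr f a 0 = RtoC 1.
Proof. reflexivity. Qed.

Lemma csum_S (f : nat -> C) n : csum f (S n) = (csum f n + f n)%C.
Proof. reflexivity. Qed.

Lemma Csub_nz (x y : C) : x <> y -> (x - y)%C <> RtoC 0.
Proof. intros H E. apply H. replace x with ((x - y) + y)%C by ring. rewrite E. ring. Qed.

Lemma pf_identity (g l : nat -> C)
  (Hd : forall m n : nat, (1 <= m)%nat -> (1 <= n)%nat -> m <> n -> g m <> g n)
  (Hl : forall k, (3 <= k)%nat -> l k <> RtoC 0) :
  forall d z, (forall k, (1 <= k <= 2 + d)%nat -> z <> g k) ->
  rr g l (2 + d) z = csum (fun j => cN g l (2 + d) (S j) / (z - g (S j)))%C (2 + d).
Proof.
  induction d; intros z Hz.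
  - unfold rr, cN, Ec, nb. simpl.
    assert (z - g 1%nat <> 0)%C by (apply Csub_nz; apply Hz; lia).
    assert (z - g 2%nat <> 0)%C by (apply Csub_nz; apply Hz; lia).
    assert (g 1%nat - g 2%nat <> 0)%C by (apply Csub_nz; apply Hd; lia).
    assert (g 2%nat - g 1%nat <> 0)%C by (apply Csub_nz; apply Hd; lia).
    field. repeat split; auto.
  - set (N := (2 + d)%nat) in *.
    replace (2 + S d)%nat with (S N) by (unfold N; lia).
    set (g' := g (S N)). set (l' := l (S N)).
    assert (Hl' : l' <> RtoC 0) by (apply Hl; unfold N; lia).
    assert (Hzg' : (z - g')%C <> RtoC 0) by (apply Csub_nz; apply Hz; unfold N; lia).
    assert (Hg'n : forall k, (1 <= k <= N)%nat -> g' <> g k) by (intros; apply Hd; lia).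
    assert (IHz := IHd z ltac:(intros; apply Hz; lia)).
    assert (IHg := IHd g' Hg'n). fold N in IHz, IHg.
    assert (Hrr : forall w, rr g l (S N) w =
       (pr (fun k => (w - l k) * g k / l k) 3 (N - 2) * ((w - l') * g' / l')
        / (pr (fun k => w - g k) 1 N * (w - g')))%C).
    { intros w. unfold rr. replace (S N - 2)%nat with (S (N - 2)) by (unfold N; lia).
      rewrite !pr_S. replace (3 + (N - 2))%nat with (S N) by (unfold N; lia).
      replace (1 + N)%nat with (S N) by lia. reflexivity. }
    rewrite Hrr, csum_S.
    rewrite (csum_ext _ (fun j => (g' / l') * (cN g l N (S j) / (z - g (S j))) +
        ((g' / l') * (g' - l') / (z - g')) * (cN g l N (S j) / (z - g (S j)) - cN g l N (S j) / (g' - g (S j))))%C).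
    2:{ intros j Hj. unfold cN. replace (S N - nb (S j))%nat with (S (N - nb (S j)))
          by (unfold nb, N in *; lia).
        rewrite pr_S. replace (S (nb (S j)) + (N - nb (S j)))%nat with (S N) by (unfold nb, N in *; lia).
        fold g' l'. unfold fct. fold g' l'.
        assert (z - g (S j) <> 0)%C by (apply Csub_nz; apply Hz; lia).
        assert (g (S j) - g' <> 0)%C by (apply Csub_nz; apply Hd; unfold N in *; lia).
        assert (g' - g (S j) <> 0)%C by (apply Csub_nz; apply Hd; unfold N in *; lia).
        field. repeat split; auto. }
    rewrite csum_plus, !csum_scal, csum_minus.
    rewrite <- IHz.
    rewrite <- IHg.
    assert (HcN : cN g l (S N) (S N) = (g' / l' * (g' - l') * rr g l N g')%C).
    { unfold cN, nb. replace (Nat.max (S N) 2) with (S N) by (unfold N; lia).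
      rewrite Nat.sub_diag. unfold Ec.
      replace (S N =? 1)%nat with false by (symmetry; apply Nat.eqb_neq; unfold N; lia).
      replace (S N =? 2)%nat with false by (symmetry; apply Nat.eqb_neq; unfold N; lia).
      replace (S N - 3)%nat with (N - 2)%nat by (unfold N; lia). fold g' l'.
      unfold rr.
      rewrite (pr_ext (fct g l (S N)) (fun k => (g' - l k) * g k / l k / (g' - g k))%C)
        by (intros j Hj; unfold fct; fold g';
            assert (g' - g (3 + j)%nat <> 0)%C by (apply Csub_nz; apply Hd; unfold N in *; lia);
            field; split; auto; apply Hl; lia).
      rewrite pr_div by (intros j Hj; apply Csub_nz; apply Hd; unfold N in *; lia).
      assert (Hsp : pr (fun k => g' - g k)%C 1 N =
         ((g' - g 1%nat) * ((g' - g 2%nat) * pr (fun k => g' - g k)%C 3 (N - 2)))%C).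
      { replace N with (S (S (N - 2))) at 1 by (unfold N; lia). rewrite !pr_shift. reflexivity. }
      rewrite Hsp.
      assert (g' - g 1%nat <> 0)%C by (apply Csub_nz; apply Hd; unfold N in *; lia).
      assert (g' - g 2%nat <> 0)%C by (apply Csub_nz; apply Hd; unfold N in *; lia).
      assert (pr (fun k => g' - g k)%C 3 (N - 2) <> RtoC 0)
        by (apply pr_nz; intros j Hj; apply Csub_nz; apply Hd; unfold N in *; lia).
      rewrite pr_O.
      field. repeat split; auto. }
    rewrite HcN.
    assert (pr (fun k => z - g k)%C 1 N <> RtoC 0)
        by (apply pr_nz; intros j Hj; apply Csub_nz; apply Hz; unfold N in *; lia).
    assert (pr (fun k => g' - g k)%C 1 N <> RtoC 0)
        by (apply pr_nz; intros j Hj; apply Csub_nz; apply Hd; unfold N in *; lia).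
    unfold rr. fold g'. field. repeat split; auto.
Qed.

Lemma pf_vanish (g l : nat -> C)
  (Hd : forall m n : nat, (1 <= m)%nat -> (1 <= n)%nat -> m <> n -> g m <> g n)
  (Hl : forall k, (3 <= k)%nat -> l k <> RtoC 0)
  (Hdisj : forall m n, (3 <= m)%nat -> (1 <= n)%nat -> l m <> g n) :
  forall m N, (3 <= m)%nat -> (m <= N)%nat ->
  csum (fun j => cN g l N (S j) / (l m - g (S j)))%C N = RtoC 0.
Proof.
  intros m N Hm HN.
  replace N with (2 + (N - 2))%nat by lia.
  rewrite <- pf_identity; auto.
  2:{ intros k Hk. apply Hdisj; lia. }
  unfold rr. rewrite (pr_zero _ 3 _ (m - 3)).
  - unfold Cdiv. ring.
  - lia.
  - cbv beta. replace (3 + (m - 3))%nat with m by lia. unfold Cdiv. ring.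
Qed.

Lemma lac (rho : nat -> R) q : 1 < q -> (forall n, (1 <= n)%nat -> q * rho n <= rho (S n)) ->
  (forall n, 0 <= rho n) -> forall n d, (1 <= n)%nat -> rho n <= (/q) ^ d * rho (n + d)%nat.
Proof.
  intros Hq H Hp n d Hn. induction d.
  - rewrite Nat.add_0_r; simpl; lra.
  - replace (n + S d)%nat with (S (n + d)) by lia.
    assert (rho (n + d)%nat <= /q * rho (S (n + d))).
    { specialize (H (n + d)%nat ltac:(lia)).
      apply (Rmult_le_reg_l q). lra. rewrite <- Rmult_assoc, Rinv_r by lra. lra. }
    simpl. assert (0 <= (/q)^d) by (apply pow_le; apply Rlt_le, Rinv_0_lt_compat; lra).
    nra.
Qed.

Lemma Cmod_fct_m1 (g l : nat -> C) n k : (g n <> g k) -> l k <> RtoC 0 ->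
  Cmod (fct g l n k - 1) = Cmod (g n) * (Cmod (l k - g k) / Cmod (l k)) / Cmod (g n - g k).
Proof.
  intros H1 H2. assert (Hs := Csub_nz _ _ H1).
  replace (fct g l n k - 1)%C with (g n * (g k - l k) / ((g n - g k) * l k))%C
    by (unfold fct; field; split; auto).
  rewrite Cmod_div by (apply Cmult_neq_0; auto).
  rewrite !Cmod_mult. rewrite (Cmod_sub_sym (g k)).
  assert (0 < Cmod (l k)) by (apply Cmod_gt_0; auto).
  assert (0 < Cmod (g n - g k)) by (apply Cmod_gt_0; auto).
  field. lra.
Qed.

Lemma ratio_bound (a dl c dd t th : R) : 0 <= a -> 0 <= dl -> 0 < dd -> 0 <= th < 1 ->
  a <= t * dd -> (1 - th) * dd <= c ->
  a * dl / c <= dl * t / (1 - th).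
Proof.
  intros Ha Hdl Hdd Hth Hat Hc.
  assert (0 < c) by nra.
  apply (Rmult_le_reg_r c); auto. unfold Rdiv. rewrite Rmult_assoc, Rinv_l, Rmult_1_r by lra.
  apply Rle_trans with (dl * t * / (1 - th) * ((1 - th) * dd)).
  - replace (dl * t * / (1 - th) * ((1 - th) * dd)) with (dl * (t * dd)) by (field; lra). nra.
  - apply Rmult_le_compat_l; auto.
    assert (0 <= t) by nra. apply Rmult_le_pos. nra. apply Rlt_le, Rinv_0_lt_compat; lra.
Qed.

Lemma exp_le_mono x y : x <= y -> exp x <= exp y.
Proof. intros [H|H]. apply Rlt_le, exp_increasing; auto. subst; lra. Qed.

Lemma pow_le_one (th : R) n : 0 <= th <= 1 -> th ^ n <= 1.
Proof.
  intros Hth; induction n; simpl. lra.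
  assert (0 <= th ^ n) by (apply pow_le; lra). nra.
Qed.

Lemma pow_le_mono (th : R) a b : 0 <= th <= 1 -> (b <= a)%nat -> th ^ a <= th ^ b.
Proof.
  intros Hth Hab. replace a with (b + (a - b))%nat by lia. rewrite pow_add.
  assert (0 <= th ^ b) by (apply pow_le; lra).
  assert (th ^ (a - b) <= 1) by (apply pow_le_one; lra). nra.
Qed.

Lemma pow_le_th (th : R) a : 0 <= th <= 1 -> (1 <= a)%nat -> th ^ a <= th.
Proof. intros. rewrite <- (pow_1 th) at 2. apply pow_le_mono; auto. Qed.

Theorem lemma10
  (gamma : nat -> C) (v : nat -> R) (lambda : nat -> C)
  (Hdist : forall m n : nat, (1 <= m)%nat -> (1 <= n)%nat -> m <> n ->
             gamma m <> gamma n)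
  (Hlac : exists q : R, 1 < q /\
            forall n : nat, (1 <= n)%nat ->
              q * Cmod (gamma n) <= Cmod (gamma (S n)))
  (Hvpos : forall n : nat, (1 <= n)%nat -> 0 < v n)
  (Hvsum : ex_series (fun k => v (S k) / (1 + (Cmod (gamma (S k))) ^ 2)))
  (Hvo : is_lim_seq (fun n => v n / Vseq v n) 0)
  (Hldist : forall m n : nat, (3 <= m)%nat -> (3 <= n)%nat -> m <> n ->
              lambda m <> lambda n)
  (Hlnz : forall n : nat, (3 <= n)%nat -> lambda n <> RtoC 0)
  (Hldisj : forall m n : nat, (3 <= m)%nat -> (1 <= n)%nat ->
              lambda m <> gamma n)
  (Hlmon : forall n : nat, (3 <= n)%nat ->
             Cmod (lambda n) <= Cmod (lambda (S n)))
  (Hpert : exists M : R, exists N : nat, forall n : nat,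
             (3 <= n)%nat -> (N <= n)%nat -> in_D gamma v M n (lambda n)) :
  exists a : nat -> C,
    in_l2v v a /\
    (exists n : nat, (1 <= n)%nat /\ a n <> RtoC 0) /\
    (forall n : nat, (3 <= n)%nat -> H_vanishes_at gamma v a (lambda n)).
Proof.
  destruct Hlac as [q [Hq Hqr]].
  destruct Hpert as [M [N0 HD]].
  set (g := gamma) in *. set (l := lambda) in *.
  set (th := / q).
  assert (Hth : 0 < th < 1).
  { unfold th. split. apply Rinv_0_lt_compat; lra.
    rewrite <- Rinv_1. apply Rinv_lt_contravar; lra. }
  set (rho := fun n => Cmod (g n)).
  assert (Hrho0 : forall n, 0 <= rho n) by (intros; apply Cmod_ge_0).
  assert (Hlac : forall n d, (1 <= n)%nat -> rho n <= th ^ d * rho (n + d)%nat)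
    by (apply lac; auto).
  assert (Hlac' : forall n k, (1 <= n)%nat -> (n <= k)%nat -> rho n <= th ^ (k - n) * rho k).
  { intros n k H1 H2. replace k with (n + (k - n))%nat at 2 by lia. apply Hlac; auto. }
  assert (Hrho2 : 0 < rho 2%nat).
  { destruct (Rle_lt_or_eq_dec 0 (rho 2%nat) (Hrho0 _)) as [h|h]; auto.
    exfalso. assert (rho 1%nat <= th ^ 1 * rho 2%nat) by (apply (Hlac' 1%nat 2%nat); lia).
    rewrite <- h in H. assert (rho 1%nat = 0) by (specialize (Hrho0 1%nat); nra).
    apply (Hdist 1%nat 2%nat); try lia.
    unfold rho in h, H0. symmetry in h.
    apply Cmod_eq_0 in h. apply Cmod_eq_0 in H0. unfold g in *. congruence. }
  assert (Hrhop : forall n, (2 <= n)%nat -> 0 < rho n).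
  { intros n Hn. assert (rho 2%nat <= th ^ (n - 2) * rho n) by (apply Hlac'; lia).
    assert (0 < th ^ (n - 2)) by (apply pow_lt; lra). nra. }
  assert (Hrhoinv : forall n, (2 <= n)%nat -> / rho n <= th ^ n / (rho 2%nat * th ^ 2)).
  { intros n Hn. assert (rho 2%nat <= th ^ (n - 2) * rho n) by (apply Hlac'; lia).
    assert (0 < rho n) by auto. assert (0 < th ^ 2) by (apply pow_lt; lra).
    assert (E : th ^ n = th ^ (n - 2) * th ^ 2) by (rewrite <- pow_add; f_equal; lia).
    rewrite E. apply (Rmult_le_reg_r (rho n)); auto.
    rewrite Rinv_l by lra. unfold Rdiv.
    replace (th ^ (n - 2) * th ^ 2 * / (rho 2%nat * th ^ 2) * rho n) with
      (th ^ (n - 2) * rho n / rho 2%nat) by (field; lra).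
    apply (Rmult_le_reg_r (rho 2%nat)); auto. unfold Rdiv.
    rewrite Rmult_assoc, Rinv_l, Rmult_1_r by lra. lra. }
  assert (Hv1 : 0 < v 1%nat) by (apply Hvpos; lia).
  assert (HV : forall n, (2 <= n)%nat -> v 1%nat <= Vseq v n).
  { intros n Hn. unfold Vseq. replace (n <=? 1)%nat with false by (symmetry; apply Nat.leb_gt; lia).
    generalize (n - 2)%nat. induction n0. simpl; lra.
    simpl. assert (0 < v (S (S n0))) by (apply Hvpos; lia). lra. }
  set (dl := fun k => Cmod (l k - g k) / Cmod (l k)).
  assert (Hdl0 : forall k, 0 <= dl k).
  { intros k. unfold dl. destruct (Req_dec (Cmod (l k)) 0) as [E|E].
    rewrite E. unfold Rdiv. rewrite Rinv_0, Rmult_0_r. lra.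
    apply Rmult_le_pos. apply Cmod_ge_0. apply Rlt_le, Rinv_0_lt_compat.
    destruct (Cmod_ge_0 (l k)); auto; lra. }
  set (Mp := Rabs M + 1).
  assert (HMp : 0 < Mp) by (unfold Mp; generalize (Rabs_pos M); lra).
  assert (Hdel2 : forall k, (3 <= k)%nat -> (N0 <= k)%nat -> dl k * dl k <= Mp * (v k / Vseq v k)).
  { intros k Hk3 Hk. destruct (HD k Hk3 Hk) as [_ Hin].
    assert (Hin' := Rle_trans _ _ _ (Rmax_l _ _) Hin).
    set (A := Cmod (l k - g k)) in *. set (Bl := Cmod (l k)) in *. set (V := Vseq v k) in *.
    assert (HA : 0 < A) by (apply Cmod_gt_0; apply Csub_nz; apply Hldisj; lia).
    assert (HB : 0 < Bl) by (apply Cmod_gt_0; apply Hlnz; lia).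
    assert (HVp : 0 < V) by (assert (v 1%nat <= V) by (apply HV; lia); lra).
    assert (Hvk : 0 < v k) by (apply Hvpos; lia).
    assert (0 <= A ^ 2 / V) by (apply Rmult_le_pos; [nra| apply Rlt_le, Rinv_0_lt_compat; lra]).
    assert (H2 := Rmult_le_compat_r _ _ _ H Hin').
    replace (V / Bl ^ 2 * (A ^ 2 / V)) with (dl k * dl k) in H2 by (unfold dl; fold A Bl; field; lra).
    replace (M * v k / A ^ 2 * (A ^ 2 / V)) with (M * (v k / V)) in H2 by (field; lra).
    assert (0 <= v k / V) by (apply Rmult_le_pos; [lra| apply Rlt_le, Rinv_0_lt_compat; lra]).
    assert (M <= Mp) by (unfold Mp; generalize (Rle_abs M); lra). nra. }
  assert (Hdel0 : forall eta, 0 < eta -> exists k1, (3 <= k1)%nat /\ forall k, (k1 <= k)%nat -> dl k <= eta).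
  { intros eta Heta. apply is_lim_seq_spec in Hvo.
    destruct (Hvo (mkposreal (eta * eta / Mp) ltac:(apply Rdiv_lt_0_compat; nra))) as [K HK].
    exists (Nat.max K (Nat.max N0 3)). split. lia. intros k Hk.
    specialize (HK k ltac:(lia)). simpl in HK. rewrite Rminus_0_r in HK.
    assert (H1 := Hdel2 k ltac:(lia) ltac:(lia)).
    assert (H2 : v k / Vseq v k < eta * eta / Mp) by (eapply Rle_lt_trans; [apply Rle_abs|exact HK]).
    assert (Mp * (v k / Vseq v k) < eta * eta).
    { apply (Rmult_lt_compat_l Mp) in H2; auto. replace (Mp * (eta * eta / Mp)) with (eta * eta) in H2 by (field; lra). lra. }
    specialize (Hdl0 k). nra. }
  destruct (Hdel0 1 ltac:(lra)) as [k1 [Hk1 Hk1']].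
  destruct (finmax dl k1) as [W0 HW0].
  set (D := Rmax 1 W0).
  assert (HD0 : 0 <= D) by (unfold D; generalize (Rmax_l 1 W0); lra).
  assert (HDb : forall k, dl k <= D).
  { intros k. destruct (Nat.le_gt_cases k1 k).
    - eapply Rle_trans. apply Hk1'; auto. apply Rmax_l.
    - eapply Rle_trans. apply HW0; lia. apply Rmax_r. }
  clearbody D. clear k1 Hk1 Hk1' W0 HW0.
  set (f := fct g l).
  assert (Hth1 : 0 <= th <= 1) by lra.
  assert (Hgd : forall m n, (1 <= m)%nat -> (1 <= n)%nat -> m <> n -> g m <> g n) by exact Hdist.
  assert (Hfar : forall n k, (1 <= n)%nat -> (n < k)%nat -> (3 <= k)%nat ->
     Cmod (f n k - 1) <= dl k * th ^ (k - n) / (1 - th)).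
  { intros n k H1 H2 H3. unfold f. rewrite Cmod_fct_m1 by (try apply Hgd; try apply Hlnz; lia).
    change (rho n * dl k / Cmod (g n - g k) <= dl k * th ^ (k - n) / (1 - th)).
    apply ratio_bound with (dd := rho k);
      [apply Hrho0 | apply Hdl0 | apply Hrhop; lia | lra | apply Hlac'; lia | ].
    assert (rho n <= th ^ (k - n) * rho k) by (apply Hlac'; lia).
    assert (th ^ (k - n) <= th) by (apply pow_le_th; auto; lia).
    assert (Ht := Cmod_tri_sub (g k) (g n)). rewrite Cmod_sub_sym in Ht.
    fold (rho k) (rho n) in Ht. assert (0 < rho k) by (apply Hrhop; lia). nra. }
  assert (Hnear : forall n k, (1 <= k)%nat -> (k < n)%nat -> (3 <= k)%nat ->
     Cmod (f n k - 1) <= dl k * 1 / (1 - th)).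
  { intros n k H1 H2 H3. unfold f. rewrite Cmod_fct_m1 by (try apply Hgd; try apply Hlnz; lia).
    change (rho n * dl k / Cmod (g n - g k) <= dl k * 1 / (1 - th)).
    apply ratio_bound with (dd := rho n);
      [apply Hrho0 | apply Hdl0 | apply Hrhop; lia | lra | lra | ].
    assert (rho k <= th ^ (n - k) * rho n) by (apply Hlac'; lia).
    assert (th ^ (n - k) <= th) by (apply pow_le_th; auto; lia).
    assert (Ht := Cmod_tri_sub (g n) (g k)).
    fold (rho k) (rho n) in Ht. assert (0 < rho n) by (apply Hrhop; lia). nra. }
  set (Dq := D / (1 - th)).
  assert (HDq : 0 <= Dq) by (apply Rmult_le_pos; auto; apply Rlt_le, Rinv_0_lt_compat; lra).
  assert (Hfj : forall n j, (1 <= n)%nat -> Cmod (f n (S (nb n) + j)%nat - 1) <= (Dq * th) * th ^ j).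
  { intros n j Hn. eapply Rle_trans. apply Hfar; unfold nb; lia.
    assert (th ^ (S (nb n) + j - n) <= th ^ (S j)) by (apply pow_le_mono; auto; unfold nb; lia).
    assert (0 <= th ^ (S (nb n) + j - n)) by (apply pow_le; lra).
    unfold Dq. simpl in H. unfold Rdiv.
    assert (0 < / (1 - th)) by (apply Rinv_0_lt_compat; lra).
    specialize (HDb (S (nb n) + j)%nat). specialize (Hdl0 (S (nb n) + j)%nat).
    assert (dl (S (nb n) + j)%nat * th ^ (S (nb n) + j - n) <= D * (th * th ^ j)).
    { apply Rmult_le_compat; auto. }
    nra. }
  set (B := exp (Dq * th / (1 - th))).
  assert (HB : forall n L, (1 <= n)%nat -> Cmod (pr (f n) (S (nb n)) L) <= B).
  { intros n L Hn. eapply Rle_trans. apply pr_exp_bound. intros j; apply Hfj; auto.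
    apply exp_le_mono. rewrite rsum_geom by lra.
    assert (0 <= th ^ L) by (apply pow_le; lra).
    unfold Rdiv. apply Rmult_le_compat_r. apply Rlt_le, Rinv_0_lt_compat; lra.
    assert (0 <= Dq * th) by (apply Rmult_le_pos; lra). nra. }
  assert (HB0 : 0 <= B) by (unfold B; apply Rlt_le, exp_pos).
  set (G := B * (Dq * th) / (1 - th)).
  assert (HG0 : 0 <= G).
  { unfold G. apply Rmult_le_pos. apply Rmult_le_pos; auto. apply Rmult_le_pos; lra.
    apply Rlt_le, Rinv_0_lt_compat; lra. }
  assert (Hcauchy : forall n, (1 <= n)%nat -> forall L M, (L <= M)%nat ->
     Cmod (pr (f n) (S (nb n)) M - pr (f n) (S (nb n)) L) <= G * th ^ L).
  { intros n Hn L M' HLM. replace M' with (L + (M' - L))%nat by lia.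
    eapply Rle_trans. apply (tele_geom _ (B * (Dq * th)) th). lra.
    { intros j. replace (pr (f n) (S (nb n)) (S j) - pr (f n) (S (nb n)) j)%C with
        (pr (f n) (S (nb n)) j * (f n (S (nb n) + j)%nat - 1))%C by (rewrite pr_S; ring).
      rewrite Cmod_mult. rewrite Rmult_assoc. apply Rmult_le_compat; try apply Cmod_ge_0. apply HB; auto. apply Hfj; auto. }
    unfold G. assert (0 <= th ^ L) by (apply pow_le; lra).
    assert (0 <= th ^ (M' - L)) by (apply pow_le; lra).
    assert (0 <= B * (Dq * th)) by (apply Rmult_le_pos; auto; apply Rmult_le_pos; lra).
    assert (0 < / (1 - th)) by (apply Rinv_0_lt_compat; lra).
    assert (0 <= B * (Dq * th) * th ^ L * / (1 - th)) by (repeat apply Rmult_le_pos; lra).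
    unfold Rdiv. nra. }
  destruct (choice_nat (fun n p => (1 <= n)%nat -> forall L, Cmod (p - pr (f n) (S (nb n)) L) <= G * th ^ L))
    as [pif Hpif].
  { intros n. destruct (Nat.le_gt_cases 1 n).
    - destruct (cauchy_geom (pr (f n) (S (nb n))) G th ltac:(lra) (Hcauchy n H)) as [p Hp].
      exists p; auto.
    - exists (RtoC 0); intros; lia. }
  assert (Hpib : forall n, (1 <= n)%nat -> Cmod (pif n) <= 1 + G).
  { intros n Hn. specialize (Hpif n Hn 0%nat). simpl in Hpif.
    assert (Ht := Cmod_triangle (pif n - 1) 1). replace (pif n - 1 + 1)%C with (pif n) in Ht by ring.
    rewrite Cmod_1 in Ht. lra. }
  set (w := fun k => 1 + dl k / (1 - th)).
  assert (Hw1 : forall k, 1 <= w k).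
  { intros k. unfold w. assert (0 <= dl k / (1 - th)) by (apply Rmult_le_pos; auto; apply Rlt_le, Rinv_0_lt_compat; lra). lra. }
  assert (HPi : forall n, (3 <= n)%nat -> Cmod (pr (f n) 3 (n - 3)) <= rpr w 3 (n - 3)).
  { intros n Hn. apply pr_Cmod_le. intros j Hj.
    assert (Ht := Cmod_triangle (f n (3 + j)%nat - 1) 1). replace (f n (3 + j)%nat - 1 + 1)%C with (f n (3 + j)%nat) in Ht by ring.
    rewrite Cmod_1 in Ht. assert (H' := Hnear n (3 + j)%nat ltac:(lia) ltac:(lia) ltac:(lia)).
    unfold w. rewrite Rmult_1_r in H'. lra. }
  set (r := (1 + q) / 2).
  assert (Hr : 1 < r < q) by (unfold r; lra).
  destruct (Hdel0 ((r - 1) * (1 - th)) ltac:(nra)) as [k2 [Hk2 Hk2']].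
  assert (Hwr : forall k, (k2 <= k)%nat -> w k <= r).
  { intros k Hk. unfold w. specialize (Hk2' k Hk).
    assert (dl k / (1 - th) <= r - 1).
    { apply (Rmult_le_reg_r (1 - th)). lra. unfold Rdiv. rewrite Rmult_assoc, Rinv_l by lra. lra. }
    lra. }
  assert (Hrpr0 : forall L, 0 <= rpr w 3 L).
  { induction L; simpl. lra. apply Rmult_le_pos. exact IHL. apply Rle_trans with 1; [lra | apply Hw1]. }
  destruct (finmax (fun L => rpr w 3 L / r ^ (L + 3)) k2) as [W1 HW1].
  set (P1 := Rmax W1 0).
  assert (HP1 : 0 <= P1) by apply Rmax_r.
  assert (Hgrow : forall L, rpr w 3 L <= P1 * r ^ (L + 3)).
  { assert (Hrp : forall m, 0 < r ^ m) by (intros; apply pow_lt; lra).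
    induction L.
    - specialize (HW1 0%nat ltac:(lia)). simpl in HW1.
      assert (rpr w 3 0 / r ^ 3 <= P1) by (eapply Rle_trans; [exact HW1| apply Rmax_l]).
      apply (Rmult_le_compat_r (r ^ (0 + 3))) in H; [|apply Rlt_le; auto].
      unfold Rdiv in H. rewrite Rmult_assoc, Rinv_l in H by (specialize (Hrp 3%nat); simpl in *; lra).
      simpl in *; lra.
    - destruct (Nat.le_gt_cases (S L) k2).
      + specialize (HW1 (S L) H). simpl in HW1.
        assert (rpr w 3 (S L) / r ^ (S L + 3) <= P1) by (eapply Rle_trans; [exact HW1| apply Rmax_l]).
        apply (Rmult_le_compat_r (r ^ (S L + 3))) in H0; [|apply Rlt_le; auto].
        unfold Rdiv in H0. rewrite Rmult_assoc, Rinv_l, Rmult_1_r in H0 by (specialize (Hrp (S L + 3)%nat); lra).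
        exact H0.
      + change (rpr w 3 (S L)) with (rpr w 3 L * w (3 + L)%nat).
        assert (w (3 + L)%nat <= r) by (apply Hwr; lia).
        replace (S L + 3)%nat with (S (L + 3)) by lia. simpl pow at 1.
        specialize (Hw1 (3 + L)%nat). specialize (Hrpr0 L).
        assert (0 <= P1 * r ^ (L + 3)) by (apply Rmult_le_pos; auto; apply Rlt_le; auto).
        nra. }
  clearbody P1. clear W1 HW1.
  set (sg := r * th).
  assert (Hsg : 0 < sg < 1).
  { unfold sg, th. split. apply Rmult_lt_0_compat. lra. apply Rinv_0_lt_compat; lra.
    apply (Rmult_lt_reg_r q). lra. rewrite Rmult_assoc, Rinv_l by lra. lra. }
  set (A1 := P1 / ((1 - th) ^ 2 * (rho 2%nat * th ^ 2))).
  assert (HA1 : 0 <= A1).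
  { unfold A1. apply Rmult_le_pos; auto. apply Rlt_le, Rinv_0_lt_compat.
    apply Rmult_lt_0_compat. apply pow_lt; lra. apply Rmult_lt_0_compat; auto. apply pow_lt; lra. }
  assert (HE : forall n, (3 <= n)%nat -> Cmod (Ec g l n) <= dl n * A1 * sg ^ n).
  { intros n Hn. unfold Ec.
    replace (n =? 1)%nat with false by (symmetry; apply Nat.eqb_neq; lia).
    replace (n =? 2)%nat with false by (symmetry; apply Nat.eqb_neq; lia).
    assert (Hc1 : (1 - th) * rho n <= Cmod (g n - g 1%nat)).
    { assert (rho 1%nat <= th ^ (n - 1) * rho n) by (apply Hlac'; lia).
      assert (th ^ (n - 1) <= th) by (apply pow_le_th; auto; lia).
      assert (Ht := Cmod_tri_sub (g n) (g 1%nat)). fold (rho n) (rho 1%nat) in Ht.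
      assert (0 < rho n) by (apply Hrhop; lia). nra. }
    assert (Hc2 : (1 - th) * rho n <= Cmod (g n - g 2%nat)).
    { assert (rho 2%nat <= th ^ (n - 2) * rho n) by (apply Hlac'; lia).
      assert (th ^ (n - 2) <= th) by (apply pow_le_th; auto; lia).
      assert (Ht := Cmod_tri_sub (g n) (g 2%nat)). fold (rho n) (rho 2%nat) in Ht.
      assert (0 < rho n) by (apply Hrhop; lia). nra. }
    assert (Hrn : 0 < rho n) by (apply Hrhop; lia).
    assert (Hln : l n <> RtoC 0) by (apply Hlnz; lia).
    assert (Hne1 : (g n - g 1%nat)%C <> RtoC 0) by (apply Csub_nz; apply Hgd; lia).
    assert (Hne2 : (g n - g 2%nat)%C <> RtoC 0) by (apply Csub_nz; apply Hgd; lia).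
    rewrite Cmod_div by (apply Cmult_neq_0; auto).
    rewrite Cmod_mult, Cmod_div, Cmod_mult, Cmod_mult by auto.
    rewrite (Cmod_sub_sym (g n) (l n)).
    change (Cmod (g n)) with (rho n). fold (dl n). unfold dl at 1.
    set (X := Cmod (pr (f n) 3 (n - 3))).
    assert (HX : X <= P1 * r ^ n).
    { eapply Rle_trans. apply HPi; auto. replace n with (n - 3 + 3)%nat at 2 by lia. apply Hgrow. }
    assert (HX0 : 0 <= X) by apply Cmod_ge_0.
    fold (dl n). 
    assert (Hinv := Hrhoinv n ltac:(lia)).
    set (c1 := Cmod (g n - g 1%nat)) in *. set (c2 := Cmod (g n - g 2%nat)) in *.
    assert (0 < 1 - th) by lra.
    assert (Hcc : (1 - th) ^ 2 * (rho n * rho n) <= c1 * c2).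
    { assert (0 <= (1 - th) * rho n) by nra. simpl. nra. }
    assert (Hpos : 0 < (1 - th) ^ 2 * (rho n * rho n)) by (apply Rmult_lt_0_compat; [apply pow_lt; lra| nra]).
    apply Rle_trans with (rho n * dl n * X / ((1 - th) ^ 2 * (rho n * rho n))).
    { replace (rho n * Cmod (l n - g n) / Cmod (l n) * Cmod (pr (fct g l n) 3 (n - 3)) / (c1 * c2))
        with (rho n * dl n * X / (c1 * c2)) by (unfold dl, X, f; unfold Rdiv; ring).
      unfold Rdiv. apply Rmult_le_compat_l. specialize (Hdl0 n). apply Rmult_le_pos; nra.
      apply Rinv_le_contravar; auto. }
    replace (rho n * dl n * X / ((1 - th) ^ 2 * (rho n * rho n))) with
      (dl n * X * / rho n / (1 - th) ^ 2) by (field; lra).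
    unfold A1, sg. rewrite Rpow_mult_distr.
    assert (0 < (1 - th) ^ 2) by (apply pow_lt; lra).
    assert (0 < rho 2%nat * th ^ 2) by (apply Rmult_lt_0_compat; auto; apply pow_lt; lra).
    replace (dl n * (P1 / ((1 - th) ^ 2 * (rho 2%nat * th ^ 2))) * (r ^ n * th ^ n)) with
      (dl n * (P1 * r ^ n) * (th ^ n / (rho 2%nat * th ^ 2)) / (1 - th) ^ 2) by (field; lra).
    unfold Rdiv. apply Rmult_le_compat_r. apply Rlt_le, Rinv_0_lt_compat; lra.
    specialize (Hdl0 n). assert (0 <= / rho n) by (apply Rlt_le, Rinv_0_lt_compat; lra).
    apply Rmult_le_compat; auto. apply Rmult_le_pos; auto. apply Rmult_le_compat_l; auto. }
  set (c := fun n => (Ec g l n * pif n)%C).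
  assert (Hcb : forall n, (3 <= n)%nat -> Cmod (c n) <= (1 + G) * (dl n * A1 * sg ^ n)).
  { intros n Hn. unfold c. rewrite Cmod_mult. rewrite Rmult_comm.
    apply Rmult_le_compat; try apply Cmod_ge_0. apply Hpib; lia. apply HE; auto. }
  assert (Hcnz : forall n, (1 <= n)%nat -> RtoC (v n) <> RtoC 0).
  { intros n Hn E. injection E. specialize (Hvpos n Hn). lra. }
  exists (fun n => (c n / RtoC (v n))%C).
  split; [|split].
  -
    unfold in_l2v. set (n0 := Nat.max N0 3).
    apply (proj2 (ex_series_incr_n _ n0)).
    set (C0 := (1 + G) ^ 2 * A1 ^ 2 * Mp / v 1%nat).
    apply (ex_series_le (K := R_AbsRing) (V := R_CompleteNormedModule) _ (fun k => (C0 * (sg ^ 2) ^ (S n0)) * (sg ^ 2) ^ k)).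
    2:{ eapply ex_series_ext.
        2: apply (ex_series_scal (K := R_AbsRing) (V := R_NormedModule) (C0 * (sg ^ 2) ^ (S n0)) (fun k => (sg ^ 2) ^ k)).
        intros; reflexivity.
        apply ex_series_geom. rewrite Rabs_right. assert (0 < sg ^ 2) by (apply pow_lt; lra).
        simpl. nra. apply Rle_ge, pow_le; lra. }
    intros k. set (n := S (n0 + k)). change (norm (Cmod (c n / RtoC (v n)) ^ 2 * v n) <= C0 * (sg ^ 2) ^ S n0 * (sg ^ 2) ^ k).
    assert (Hvn : 0 < v n) by (apply Hvpos; unfold n; lia).
    rewrite Cmod_div by (apply Hcnz; unfold n; lia). rewrite Cmod_R. rewrite (Rabs_right (v n)) by lra.
    assert (Hnn : 0 <= (Cmod (c n) / v n) ^ 2 * v n).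
    { apply Rmult_le_pos; [apply pow2_ge_0| lra]. }
    change (norm ((Cmod (c n) / v n) ^ 2 * v n)) with (Rabs ((Cmod (c n) / v n) ^ 2 * v n)).
    rewrite Rabs_right by lra.
    replace (C0 * (sg ^ 2) ^ S n0 * (sg ^ 2) ^ k) with (C0 * (sg ^ n) ^ 2)
      by (rewrite Rmult_assoc, <- pow_add, <- !pow_mult; f_equal; f_equal; unfold n; lia).
    assert (Hc := Hcb n ltac:(unfold n, n0; lia)).
    assert (Hd2 := Hdel2 n ltac:(unfold n, n0; lia) ltac:(unfold n, n0; lia)).
    assert (HVn := HV n ltac:(unfold n; lia)).
    set (cc := Cmod (c n)) in *. assert (0 <= cc) by apply Cmod_ge_0.
    assert (0 <= sg ^ n) by (apply pow_le; lra).
    specialize (Hdl0 n).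
    set (Y := dl n * A1 * sg ^ n) in *.
    assert (0 <= Y) by (unfold Y; apply Rmult_le_pos; [apply Rmult_le_pos|]; auto).
    assert (0 <= 1 + G) by lra.
    assert (Hcc2 : cc ^ 2 <= ((1 + G) * Y) ^ 2) by (simpl; nra).
    replace ((cc / v n) ^ 2 * v n) with (cc ^ 2 / v n) by (field; lra).
    apply Rle_trans with (((1 + G) * Y) ^ 2 / v n).
    { unfold Rdiv. apply Rmult_le_compat_r; auto. apply Rlt_le, Rinv_0_lt_compat; lra. }
    replace (((1 + G) * Y) ^ 2 / v n) with ((1 + G) ^ 2 * A1 ^ 2 * (sg ^ n) ^ 2 * (dl n * dl n / v n))
      by (unfold Y; field; lra).
    assert (dl n * dl n / v n <= Mp / v 1%nat).
    { apply Rle_trans with (Mp / Vseq v n).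
      - apply (Rmult_le_reg_r (v n)); auto. unfold Rdiv. rewrite Rmult_assoc, Rinv_l, Rmult_1_r by lra.
        replace (Mp * / Vseq v n * v n) with (Mp * (v n / Vseq v n)) by (unfold Rdiv; ring). exact Hd2.
      - unfold Rdiv. apply Rmult_le_compat_l; auto. lra. apply Rinv_le_contravar; auto. }
    unfold C0. assert (0 <= (1 + G) ^ 2 * A1 ^ 2 * (sg ^ n) ^ 2).
    { apply Rmult_le_pos; [apply Rmult_le_pos|]; apply pow2_ge_0. }
    replace ((1 + G) ^ 2 * A1 ^ 2 * Mp / v 1%nat * (sg ^ n) ^ 2) with
      ((1 + G) ^ 2 * A1 ^ 2 * (sg ^ n) ^ 2 * (Mp / v 1%nat)) by (field; lra).
    apply Rmult_le_compat_l; auto.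
  -
    exists 1%nat. split. lia.
    assert (Hpi1 : pif 1%nat <> RtoC 0).
    { set (u := pr (f 1%nat) 3).
      assert (Hu : forall L, Cmod (pif 1%nat - u L) <= G * th ^ L) by (apply Hpif; lia).
      assert (Hfu : forall j, Cmod (f 1%nat (3 + j)%nat - 1) <= Dq * th * th ^ j)
        by (intros j; apply (Hfj 1%nat j); lia).
      destruct (geom_small th ((1 - th) / (2 * (Dq * th) + 1)) ltac:(lra)) as [L0 HL0].
      { apply Rdiv_lt_0_compat. lra. assert (0 <= Dq * th) by (apply Rmult_le_pos; lra). lra. }
      specialize (HL0 L0 (le_n _)).
      set (X := Dq * th * th ^ L0 / (1 - th)).
      assert (HX : 0 <= X <= 1 / 2).
      { assert (0 <= Dq * th) by (apply Rmult_le_pos; lra). assert (0 <= th ^ L0) by (apply pow_le; lra).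
        unfold X. split. apply Rmult_le_pos. apply Rmult_le_pos; lra. apply Rlt_le, Rinv_0_lt_compat; lra.
        apply (Rmult_le_reg_r (1 - th)). lra. unfold Rdiv. rewrite Rmult_assoc, Rinv_l by lra.
        apply (Rmult_lt_compat_l (2 * (Dq * th) + 1)) in HL0; [|lra].
        replace ((2 * (Dq * th) + 1) * ((1 - th) / (2 * (Dq * th) + 1))) with (1 - th) in HL0 by (field; lra).
        nra. }
      assert (Hm : 0 < Cmod (u L0)).
      { apply Cmod_gt_0. apply pr_nz. intros j Hj. unfold f, fct.
        assert (Hk : (3 <= 3 + j)%nat) by lia. set (k := (3 + j)%nat) in *.
        assert (H1 : (g 1%nat - l k)%C <> RtoC 0) by (apply Csub_nz; intro E; symmetry in E; revert E; apply Hldisj; lia).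
        assert (H2 : g k <> RtoC 0) by (intro E; assert (0 < rho k) by (apply Hrhop; lia); unfold rho in H; rewrite E, Cmod_0 in H; lra).
        assert (H3 : (g 1%nat - g k)%C <> RtoC 0) by (apply Csub_nz; apply Hgd; lia).
        assert (H4 : l k <> RtoC 0) by (apply Hlnz; lia).
        intro E. assert (HE0 : Cmod ((g 1%nat - l k) * g k / ((g 1%nat - g k) * l k))%C = 0) by (rewrite E; apply Cmod_0).
        rewrite Cmod_div, !Cmod_mult in HE0 by (apply Cmult_neq_0; auto).
        apply Cmod_gt_0 in H1, H2, H3, H4.
        assert (0 < Cmod (g 1%nat - l k) * Cmod (g k) / (Cmod (g 1%nat - g k) * Cmod (l k))).
        { apply Rdiv_lt_0_compat; apply Rmult_lt_0_compat; auto. }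
        lra. }
      set (m := Cmod (u L0)) in *.
      assert (Hlow : forall d, m * (1 - X * (1 - th ^ d)) <= Cmod (u (L0 + d)%nat)).
      { induction d.
        - rewrite Nat.add_0_r. change (th ^ 0) with 1. fold m. lra.
        - replace (L0 + S d)%nat with (S (L0 + d)) by lia. unfold u. rewrite pr_S. fold u.
          rewrite Cmod_mult.
          assert (Hf := Hfu (L0 + d)%nat).
          assert (Ht := Cmod_triangle (f 1%nat (3 + (L0 + d))%nat - 1) 1).
          replace (f 1%nat (3 + (L0 + d))%nat - 1 + 1)%C with (f 1%nat (3 + (L0 + d))%nat) in Ht by ring.
          rewrite Cmod_1 in Ht.
          assert (Ht2 := Cmod_tri_sub 1 (f 1%nat (3 + (L0 + d))%nat)). rewrite Cmod_1, Cmod_sub_sym in Ht2.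
          assert (Eb : Dq * th * th ^ (L0 + d) = X * (1 - th) * th ^ d) by (unfold X; rewrite pow_add; field; lra).
          rewrite Eb in Hf.
          assert (0 <= th ^ d <= 1) by (split; [apply pow_le; lra| apply pow_le_one; lra]).
          set (a := X * (1 - th ^ d)). set (b := X * (1 - th) * th ^ d) in *.
          assert (0 <= a <= 1/2) by (unfold a; split; nra).
          assert (0 <= (1 - th) * th ^ d <= 1) by (split; nra).
          assert (0 <= b <= 1/2) by (unfold b; rewrite Rmult_assoc; split; nra).
          replace (X * (1 - th ^ S d)) with (a + b) by (unfold a, b; simpl; ring).
          assert (0 <= m) by apply Cmod_ge_0.
          assert (m * (1 - a) <= Cmod (u (L0 + d)%nat)) by exact IHd.
          assert (1 - b <= Cmod (f 1%nat (3 + (L0 + d))%nat)) by lra.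
          assert (0 <= m * (1 - a)) by nra.
          assert (0 <= m * (a * b)) by (apply Rmult_le_pos; [lra| apply Rmult_le_pos; lra]).
          apply Rle_trans with (m * (1 - a) * (1 - b)). nra.
          apply Rmult_le_compat; lra. }
      assert (Hlow2 : forall d, m / 2 <= Cmod (u (L0 + d)%nat)).
      { intros d. eapply Rle_trans. 2: apply Hlow.
        assert (0 <= th ^ d <= 1) by (split; [apply pow_le; lra| apply pow_le_one; lra]).
        assert (0 <= m) by apply Cmod_ge_0. assert (0 <= X * th ^ d) by (apply Rmult_le_pos; lra).
        assert (0 <= X * (1 - th ^ d) <= 1/2) by (split; nra). nra. }
      destruct (geom_small th (m / (2 * (G + 1))) ltac:(lra)) as [N1 HN1].
      { apply Rdiv_lt_0_compat; lra. }
      specialize (HN1 (L0 + N1)%nat ltac:(lia)). specialize (Hlow2 N1). specialize (Hu (L0 + N1)%nat).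
      assert (Ht := Cmod_tri_sub (u (L0 + N1)%nat) (pif 1%nat)). rewrite Cmod_sub_sym in Ht.
      assert (0 <= th ^ (L0 + N1)) by (apply pow_le; lra).
      assert ((G + 1) * th ^ (L0 + N1) < m / 2).
      { apply (Rmult_lt_compat_l (G + 1)) in HN1; [|lra].
        replace ((G + 1) * (m / (2 * (G + 1)))) with (m / 2) in HN1 by (field; lra). lra. }
      intro E. rewrite E, Cmod_0 in Ht. rewrite E in Hu.
      assert (G * th ^ (L0 + N1) <= (G + 1) * th ^ (L0 + N1)) by nra. lra. }
    unfold c. assert (Hg12 : (g 1%nat - g 2%nat)%C <> RtoC 0) by (apply Csub_nz; apply Hgd; lia).
    assert (Ec g l 1 <> RtoC 0).
    { unfold Ec. simpl. intro E. assert (Cmod (/ (g 1%nat - g 2%nat))%C = 0) by (rewrite E; apply Cmod_0).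
      rewrite Cmod_inv in H by auto. apply Cmod_gt_0 in Hg12.
      assert (0 < / Cmod (g 1%nat - g 2%nat)) by (apply Rinv_0_lt_compat; auto). lra. }
    unfold Cdiv. apply Cmult_neq_0. apply Cmult_neq_0; auto.
    intro E. assert (Cmod (/ RtoC (v 1%nat))%C = 0) by (rewrite E; apply Cmod_0).
    rewrite Cmod_inv, Cmod_R in H0 by (apply Hcnz; lia).
    assert (0 < / Rabs (v 1%nat)) by (apply Rinv_0_lt_compat; rewrite Rabs_right; lra). lra.
  - intros m Hm. unfold H_vanishes_at. set (z := l m).
    assert (Hzg : forall n, (1 <= n)%nat -> (z - g n)%C <> RtoC 0) by (intros; apply Csub_nz; apply Hldisj; lia).
    assert (Hmu : 0 < sg * th < 1) by nra.
    assert (HWb : exists W, 0 <= W /\ forall n, (1 <= n)%nat -> Cmod (Ec g l n) / Cmod (z - g n) <= W * (sg * th) ^ n).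
    { assert (Hy : 0 < rho 2%nat * th ^ 2 / (2 * Cmod z + 1)).
      { apply Rdiv_lt_0_compat. apply Rmult_lt_0_compat; auto. apply pow_lt; lra.
        generalize (Cmod_ge_0 z); lra. }
      destruct (geom_small th _ ltac:(lra) Hy) as [Nz HNz].
      set (nz := Nat.max Nz 3).
      set (W1 := 2 * (D * A1) / (rho 2%nat * th ^ 2)).
      assert (HW1 : 0 <= W1).
      { unfold W1. apply Rmult_le_pos. apply Rmult_le_pos. lra. apply Rmult_le_pos; auto.
        apply Rlt_le, Rinv_0_lt_compat. apply Rmult_lt_0_compat; auto. apply pow_lt; lra. }
      destruct (finmax (fun n => Cmod (Ec g l n) / Cmod (z - g n) / (sg * th) ^ n) nz) as [W2 HW2].
      exists (Rmax W1 W2). split. eapply Rle_trans; [exact HW1| apply Rmax_l].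
      intros n Hn. assert (Hp : 0 < (sg * th) ^ n) by (apply pow_lt; lra).
      destruct (Nat.le_gt_cases nz n) as [Hbig | Hsmall].
      - apply Rle_trans with (W1 * (sg * th) ^ n).
        2:{ apply Rmult_le_compat_r. lra. apply Rmax_l. }
        specialize (HNz n ltac:(unfold nz in *; lia)).
        assert (Hrn : 0 < rho n) by (apply Hrhop; unfold nz in *; lia).
        assert (Hinv := Hrhoinv n ltac:(unfold nz in *; lia)).
        assert (Hrbig : 2 * Cmod z + 1 <= rho n).
        { assert (/ rho n <= / (2 * Cmod z + 1)).
          { eapply Rle_trans. exact Hinv. unfold Rdiv.
            assert (0 < rho 2%nat * th ^ 2) by (apply Rmult_lt_0_compat; auto; apply pow_lt; lra).
            apply (Rmult_le_reg_r (rho 2%nat * th ^ 2)); auto. rewrite Rmult_assoc, Rinv_l, Rmult_1_r by lra.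
            unfold Rdiv in HNz. nra. }
          generalize (Cmod_ge_0 z); intros Hz0.
          destruct (Rle_lt_dec (2 * Cmod z + 1) (rho n)) as [h|h]; auto. exfalso.
          assert (/ (2 * Cmod z + 1) < / rho n) by (apply Rinv_lt_contravar; auto; nra). lra. }
        assert (Hzn : rho n / 2 <= Cmod (z - g n)).
        { assert (Ht := Cmod_tri_sub (g n) z). rewrite Cmod_sub_sym in Ht. fold (rho n) in Ht.
          generalize (Cmod_ge_0 z); lra. }
        assert (HEn := HE n ltac:(unfold nz in *; lia)).
        specialize (HDb n). specialize (Hdl0 n).
        assert (HEn' : Cmod (Ec g l n) <= D * A1 * sg ^ n).
        { eapply Rle_trans. exact HEn. apply Rmult_le_compat_r. apply pow_le; lra.
          apply Rmult_le_compat_r; auto. }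
        assert (0 < Cmod (z - g n)) by lra.
        apply Rle_trans with (D * A1 * sg ^ n * (2 / rho n)).
        { unfold Rdiv. apply Rmult_le_compat. apply Cmod_ge_0. apply Rlt_le, Rinv_0_lt_compat; lra.
          exact HEn'. replace (2 * / rho n) with (/ (rho n / 2)) by (field; lra).
          apply Rinv_le_contravar; lra. }
        unfold W1. rewrite Rpow_mult_distr.
        assert (0 <= D * A1 * sg ^ n) by (apply Rmult_le_pos; [apply Rmult_le_pos; auto| apply pow_le; lra]).
        replace (2 * (D * A1) / (rho 2%nat * th ^ 2) * (sg ^ n * th ^ n)) with
          (D * A1 * sg ^ n * (2 * (th ^ n / (rho 2%nat * th ^ 2)))) by (assert (rho 2%nat <> 0) by lra; assert (th <> 0) by lra; field; repeat split; auto).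
        apply Rmult_le_compat_l; auto. unfold Rdiv. apply Rmult_le_compat_l. lra. exact Hinv.
      - specialize (HW2 n ltac:(lia)). simpl in HW2.
        assert (HH : Cmod (Ec g l n) / Cmod (z - g n) / (sg * th) ^ n <= Rmax W1 W2)
          by (eapply Rle_trans; [exact HW2| apply Rmax_r]).
        apply (Rmult_le_compat_r ((sg * th) ^ n)) in HH; [|lra].
        unfold Rdiv in HH. rewrite Rmult_assoc, Rinv_l, Rmult_1_r in HH by lra. exact HH. }
    destruct HWb as [W [HW0 HW]].
    assert (Hkey : forall eps, 0 < eps -> exists K0, forall K, (K0 <= K)%nat ->
       Cmod (csum (fun j => c (S j) / (z - g (S j)))%C K) < eps).
    { intros eps Heps.
      set (Cst := W * G / (1 - sg)).
      assert (HCst : 0 <= Cst).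
      { unfold Cst. apply Rmult_le_pos. apply Rmult_le_pos; auto. apply Rlt_le, Rinv_0_lt_compat; lra. }
      destruct (geom_small th (eps / (Cst + 1)) ltac:(lra)) as [N2 HN2].
      { apply Rdiv_lt_0_compat; lra. }
      exists (Nat.max m (S N2)). intros K HK.
      assert (Hv0 := pf_vanish g l Hgd Hlnz Hldisj m K Hm ltac:(lia)). fold z in Hv0.
      replace (csum (fun j => c (S j) / (z - g (S j)))%C K) with
        (csum (fun j => c (S j) / (z - g (S j)))%C K - csum (fun j => cN g l K (S j) / (z - g (S j)))%C K)%C
        by (rewrite Hv0; ring).
      rewrite <- csum_minus.
      eapply Rle_lt_trans. apply csum_tri.
      eapply Rle_lt_trans. apply rsum_le with (g := fun j => (W * G * th ^ (K - 1)) * sg ^ j).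
      { intros j Hj. set (n := S j).
        replace (c n / (z - g n) - cN g l K n / (z - g n))%C with
          (Ec g l n * (pif n - pr (f n) (S (nb n)) (K - nb n)) / (z - g n))%C
          by (unfold c, cN, f; field; apply Hzg; unfold n; lia).
        rewrite Cmod_div, Cmod_mult by (apply Hzg; unfold n; lia).
        assert (Hz0 : 0 < Cmod (z - g n)) by (apply Cmod_gt_0, Hzg; unfold n; lia).
        replace (Cmod (Ec g l n) * Cmod (pif n - pr (f n) (S (nb n)) (K - nb n)) / Cmod (z - g n)) with
          (Cmod (Ec g l n) / Cmod (z - g n) * Cmod (pif n - pr (f n) (S (nb n)) (K - nb n))) by (field; lra).
        assert (H1 := HW n ltac:(unfold n; lia)).
        assert (H2 := Hpif n ltac:(unfold n; lia) (K - nb n)%nat).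
        apply Rle_trans with (W * (sg * th) ^ n * (G * th ^ (K - nb n))).
        { apply Rmult_le_compat; auto. apply Rmult_le_pos. apply Cmod_ge_0.
          apply Rlt_le, Rinv_0_lt_compat; auto. apply Cmod_ge_0. }
        rewrite Rpow_mult_distr.
        assert (Hs1 : sg ^ n <= sg ^ j) by (apply pow_le_mono; unfold n; try lia; lra).
        assert (Hs2 : th ^ n * th ^ (K - nb n) <= th ^ (K - 1)).
        { rewrite <- pow_add. apply pow_le_mono. lra. unfold n, nb in *; lia. }
        assert (0 <= sg ^ n) by (apply pow_le; lra). assert (0 <= th ^ n) by (apply pow_le; lra).
        assert (0 <= th ^ (K - nb n)) by (apply pow_le; lra).
        assert (0 <= W * G) by (apply Rmult_le_pos; auto).
        replace (W * (sg ^ n * th ^ n) * (G * th ^ (K - nb n))) with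
          ((W * G) * (sg ^ n * (th ^ n * th ^ (K - nb n)))) by ring.
        replace (W * G * th ^ (K - 1) * sg ^ j) with ((W * G) * (sg ^ j * th ^ (K - 1))) by ring.
        apply Rmult_le_compat_l; auto. apply Rmult_le_compat; auto.
        apply Rmult_le_pos; auto. }
      rewrite rsum_geom by lra.
      specialize (HN2 (K - 1)%nat ltac:(lia)).
      assert (0 <= th ^ (K - 1)) by (apply pow_le; lra).
      assert (0 <= sg ^ K <= 1) by (split; [apply pow_le; lra| apply pow_le_one; lra]).
      apply Rle_lt_trans with (Cst * th ^ (K - 1)).
      { unfold Cst. unfold Rdiv. assert (0 < / (1 - sg)) by (apply Rinv_0_lt_compat; lra).
        assert (0 <= W * G * th ^ (K - 1)) by (apply Rmult_le_pos; [apply Rmult_le_pos|]; auto).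
        assert (0 <= W * G * th ^ (K - 1) * / (1 - sg)) by (apply Rmult_le_pos; lra).
        nra. }
      apply (Rmult_lt_compat_l (Cst + 1)) in HN2; [|lra].
      replace ((Cst + 1) * (eps / (Cst + 1))) with eps in HN2 by (field; lra).
      nra. }
    unfold is_series. apply filterlim_locally. intros eps.
    destruct (Hkey eps (cond_pos eps)) as [K0 HK0]. exists K0. intros K HK.
    apply norm_compat1.
    assert (Hsum : forall K, sum_n (H_term g v (fun n => (c n / RtoC (v n))%C) z) K =
        csum (fun j => c (S j) / (z - g (S j)))%C (S K)).
    { assert (Ht : forall j, H_term g v (fun n => (c n / RtoC (v n))%C) z j = (c (S j) / (z - g (S j)))%C).
      { intros j. unfold H_term. field. split. apply Hzg; lia. apply Hcnz; lia. }
      intros K1; induction K1.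
      - rewrite sum_O, Ht. simpl. ring.
      - rewrite sum_Sn, IHK1, Ht. reflexivity. }
    rewrite Hsum. change (Cmod (csum (fun j => c (S j) / (z - g (S j)))%C (S K) - 0)%C < eps).
    replace (csum (fun j => c (S j) / (z - g (S j)))%C (S K) - 0)%C with
      (csum (fun j => c (S j) / (z - g (S j)))%C (S K)) by ring.
    apply HK0. lia.
Qed.
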